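(* The satisfiability problem is undecidable for the class of formulas $\Phi_1 \wedge \Phi_2$, where $\Phi_1$ is a prenex formula of linear integer arithmetic with quantifier prefix in $\exists^*\forall^*$ and $\Phi_2$ is a prenex formula of linear integer arithmetic with quantifier prefix in $\forall^*\exists^*$, both over the signature of linear integer arithmetic extended with a single monadic predicate symbol $P$, where $P$ is required to be interpreted as a finite set of integers.
   Context: Linear integer arithmetic ($\mathsf{LIA}$) has the sort $\mathsf{Int}$ interpreted as the integers, the predicate $\geq$, addition $+$, and constants $0,1$, with their standard interpretation, and no uninterpreted function symbols. Formulas may have free variables (interpreted as integers); a formula is satisfiable if some assignment of integers to its free variables and some finite set of integers interpreting $P$ make it true. *)

(* Defs.v *)
From Stdlib Require Import ZArith List Arith.
Import ListNotations.

Inductive term : Type :=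
| TVar  (x : nat)
| TZero
| TOne
| TAdd  (s t : term).

Inductive form : Type :=
| FGe   (s t : term)
| FEq   (s t : term)
| FP    (t : term)
| FTrue
| FFalse
| FNot  (p : form)
| FAnd  (p q : form)
| FOr   (p q : form)
| FImp  (p q : form)
| FEx   (x : nat) (p : form)
| FAll  (x : nat) (p : form).

Definition update (rho : nat -> Z) (x : nat) (z : Z) : nat -> Z :=
  fun y => if Nat.eqb y x then z else rho y.

Fixpoint eval_term (rho : nat -> Z) (t : term) : Z :=
  match t with
  | TVar x => rho x
  | TZero => 0%Z
  | TOne => 1%Z
  | TAdd s u => (eval_term rho s + eval_term rho u)%Z
  end.

Fixpoint holds (P : list Z) (rho : nat -> Z) (p : form) : Prop :=
  match p with
  | FGe s t => (eval_term rho s >= eval_term rho t)%Z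
  | FEq s t => eval_term rho s = eval_term rho t
  | FP t => In (eval_term rho t) P
  | FTrue => True
  | FFalse => False
  | FNot q => ~ holds P rho q
  | FAnd q r => holds P rho q /\ holds P rho r
  | FOr q r => holds P rho q \/ holds P rho r
  | FImp q r => holds P rho q -> holds P rho r
  | FEx x q => exists z : Z, holds P (update rho x z) q
  | FAll x q => forall z : Z, holds P (update rho x z) q
  end.

Definition sat (p : form) : Prop :=
  exists (rho : nat -> Z) (P : list Z), holds P rho p.

Fixpoint qfree (p : form) : Prop :=
  match p with
  | FNot q => qfree q
  | FAnd q r | FOr q r | FImp q r => qfree q /\ qfree r
  | FEx _ _ | FAll _ _ => False
  | _ => True
  end.

Inductive prefix_A : form -> Prop :=
| pA_qf p : qfree p -> prefix_A p
| pA_all x p : prefix_A p -> prefix_A (FAll x p).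

Inductive prefix_E : form -> Prop :=
| pE_qf p : qfree p -> prefix_E p
| pE_ex x p : prefix_E p -> prefix_E (FEx x p).

Inductive prefix_EA : form -> Prop :=
| pEA_A p : prefix_A p -> prefix_EA p
| pEA_ex x p : prefix_EA p -> prefix_EA (FEx x p).

Inductive prefix_AE : form -> Prop :=
| pAE_E p : prefix_E p -> prefix_AE p
| pAE_all x p : prefix_AE p -> prefix_AE (FAll x p).

Definition in_class (p : form) : Prop :=
  exists p1 p2, p = FAnd p1 p2 /\ prefix_EA p1 /\ prefix_AE p2.

Definition cpair (a b : nat) : nat := (a + b) * (a + b + 1) / 2 + b.

Fixpoint code_term (t : term) : nat :=
  match t with
  | TVar x => cpair 0 x
  | TZero => cpair 1 0
  | TOne => cpair 2 0
  | TAdd s u => cpair 3 (cpair (code_term s) (code_term u))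
  end.

Fixpoint code_form (p : form) : nat :=
  match p with
  | FGe s t => cpair 0 (cpair (code_term s) (code_term t))
  | FEq s t => cpair 1 (cpair (code_term s) (code_term t))
  | FP t => cpair 2 (code_term t)
  | FTrue => cpair 3 0
  | FFalse => cpair 4 0
  | FNot q => cpair 5 (code_form q)
  | FAnd q r => cpair 6 (cpair (code_form q) (code_form r))
  | FOr q r => cpair 7 (cpair (code_form q) (code_form r))
  | FImp q r => cpair 8 (cpair (code_form q) (code_form r))
  | FEx x q => cpair 9 (cpair x (code_form q))
  | FAll x q => cpair 10 (cpair x (code_form q))
  end.

Inductive recf : Type :=
| RZero
| RSucc
| RProj (i : nat)
| RComp (f : recf) (gs : list recf)
| RPrim (f g : recf)           (* primitive recursion on first argument *)
| RMu   (f : recf).            (* unbounded minimisation on first argument *)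

Inductive reval : recf -> list nat -> nat -> Prop :=
| ev_zero v : reval RZero v 0
| ev_succ x v : reval RSucc (x :: v) (S x)
| ev_proj i v : i < length v -> reval (RProj i) v (nth i v 0)
| ev_comp f gs v ys z :
    revals gs v ys -> reval f ys z -> reval (RComp f gs) v z
| ev_prim0 f g v y : reval f v y -> reval (RPrim f g) (0 :: v) y
| ev_primS f g n v r y :
    reval (RPrim f g) (n :: v) r -> reval g (n :: r :: v) y ->
    reval (RPrim f g) (S n :: v) y
| ev_mu f v n :
    reval f (n :: v) 0 ->
    (forall m, m < n -> exists k, reval f (m :: v) (S k)) ->
    reval (RMu f) v n
with revals : list recf -> list nat -> list nat -> Prop :=
| evs_nil v : revals [] v []
| evs_cons g gs v y ys :
    reval g v y -> revals gs v ys -> revals (g :: gs) v (y :: ys).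

(* Main.v *)
Require Import Defs.
From Stdlib Require Import ZArith List Lia Arith Bool FunctionalExtensionality Classical.
Import ListNotations.

Ltac pc := try (match goal with H : ?T |- _ => idtac H ":" T; fail end); match goal with |- ?G => idtac "GOAL" G end.

Fixpoint reval_det g v y (H : reval g v y) {struct H} : forall y', reval g v y' -> y = y'
with revals_det gs v ys (H : revals gs v ys) {struct H} : forall ys', revals gs v ys' -> ys = ys'.
Proof.
  - destruct H as [v|x v|i v Hi|f gs v ys z Hs Hf|f g v y Hf|f g n v r y Hr Hg|f v n H0 Hm];
      intros y' H'; inversion H'; subst; auto.
    + match goal with K : revals _ _ _ |- _ => pose proof (revals_det _ _ _ Hs _ K); subst end. eauto.
    + eauto.
    + match goal with K : reval (RPrim _ _) _ _ |- _ => pose proof (reval_det _ _ _ Hr _ K); subst end. eauto.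
    + destruct (Nat.lt_trichotomy n y') as [Hlt|[Heq|Hgt]]; auto.
      * match goal with K : forall m, m < y' -> _ |- _ => destruct (K n Hlt) as [k Hk] end.
        pose proof (reval_det _ _ _ H0 _ Hk). discriminate.
      * destruct (Hm y' Hgt) as [k Hk].
        match goal with K : reval f (y' :: v) 0 |- _ => pose proof (reval_det _ _ _ Hk _ K) end. discriminate.
  - destruct H as [v|g gs v y ys Hg Hgs]; intros ys' H'; inversion H'; subst; auto.
    f_equal; eauto.
Qed.

Lemma comp1 f g v y z : reval g v y -> reval f [y] z -> reval (RComp f [g]) v z.
Proof. intros. econstructor; [econstructor; [eauto|constructor]|eauto]. Qed.
Lemma comp2 f g1 g2 v y1 y2 z : reval g1 v y1 -> reval g2 v y2 -> reval f [y1;y2] z -> reval (RComp f [g1;g2]) v z.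
Proof. intros. econstructor; [econstructor; [eauto|econstructor; [eauto|constructor]]|eauto]. Qed.
Lemma rproj0 a v : reval (RProj 0) (a::v) a.
Proof. apply (ev_proj 0 (a::v)). simpl; lia. Qed.
Lemma rproj1 a b v : reval (RProj 1) (a::b::v) b.
Proof. apply (ev_proj 1 (a::b::v)). simpl; lia. Qed.
Lemma rproj2 a b c v : reval (RProj 2) (a::b::c::v) c.
Proof. apply (ev_proj 2 (a::b::c::v)). simpl; lia. Qed.

Fixpoint cst (k : nat) : recf := match k with 0 => RZero | S k => RComp RSucc [cst k] end.
Lemma cst_ok k v : reval (cst k) v k.
Proof. induction k; simpl. constructor. eapply comp1; eauto. constructor. Qed.

Definition addf := RPrim (RProj 0) (RComp RSucc [RProj 1]).
Lemma addf_ok a b : reval addf [a;b] (a+b).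
Proof. induction a; simpl. constructor. apply rproj0.
  econstructor. eauto. eapply comp1. apply rproj1. constructor. Qed.

Definition mulf := RPrim RZero (RComp addf [RProj 1; RProj 2]).
Lemma mulf_ok a b : reval mulf [a;b] (a*b).
Proof. induction a; simpl. constructor. constructor.
  econstructor. eauto. eapply comp2. apply rproj1. apply rproj2.
  replace (b + a*b) with (a*b+b) by lia. apply addf_ok. Qed.

Fixpoint tri n := match n with 0 => 0 | S m => tri m + S m end.
Definition trif := RPrim RZero (RComp addf [RProj 1; RComp RSucc [RProj 0]]).
Lemma trif_ok n : reval trif [n] (tri n).
Proof. induction n; simpl. constructor. constructor.
  econstructor. eauto. eapply comp2. apply rproj1. eapply comp1. apply rproj0. constructor.
  apply addf_ok. Qed.

Lemma tri_eq s : s * (s+1) / 2 = tri s.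
Proof.
  assert (tri s * 2 = s * (s+1)). { induction s; simpl; lia. }
  rewrite <- H. apply Nat.div_mul. lia. Qed.

Definition cpairf := RComp addf [RComp trif [RComp addf [RProj 0; RProj 1]]; RProj 1].
Lemma cpairf_ok a b v : reval cpairf (a::b::v) (cpair a b).
Proof. unfold cpair. rewrite tri_eq. eapply comp2.
  eapply comp1. eapply comp2. apply rproj0. apply rproj1. apply addf_ok. apply trif_ok.
  apply rproj1. apply addf_ok. Qed.

Fixpoint num (n : nat) : term := match n with 0 => TZero | S n => TAdd (num n) TOne end.
Definition cnumf := RPrim (cst (cpair 1 0)) (RComp cpairf [cst 3; RComp cpairf [RProj 1; cst (cpair 2 0)]]).
Lemma cnumf_ok n : reval cnumf [n] (code_term (num n)).
Proof. induction n; simpl. constructor. apply cst_ok.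
  econstructor. eauto. eapply comp2. apply cst_ok. eapply comp2. apply rproj1. apply cst_ok.
  apply cpairf_ok. apply cpairf_ok. Qed.

Definition Ef := RComp cpairf [cst 6; RComp cpairf [RComp cpairf [cst 1; RComp cpairf [cst 2; cnumf]]; RProj 0]].
Lemma Ef_ok x th : code_form th = x ->
  reval Ef [x] (code_form (FAnd (FEq (TVar 1) (num x)) th)).
Proof. intros Hx. simpl. rewrite Hx. eapply comp2. apply cst_ok.
  eapply comp2. eapply comp2. apply cst_ok. eapply comp2. apply cst_ok. apply cnumf_ok.
  replace 2 with (cpair 0 1) by reflexivity. apply cpairf_ok. apply cpairf_ok. apply rproj0.
  apply cpairf_ok. apply cpairf_ok. Qed.

Definition recf_ind' (P : recf -> Prop) (HZ : P RZero) (HS : P RSucc) (HP : forall i, P (RProj i))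
  (HC : forall f gs, P f -> Forall P gs -> P (RComp f gs))
  (HR : forall f g, P f -> P g -> P (RPrim f g)) (HM : forall f, P f -> P (RMu f)) : forall r, P r :=
  fix F r := match r with
  | RZero => HZ | RSucc => HS | RProj i => HP i
  | RComp f gs => HC f gs (F f) ((fix G l := match l return Forall P l with
                                    | [] => Forall_nil _ | x :: l => Forall_cons _ (F x) (G l) end) gs)
  | RPrim f g => HR f g (F f) (F g)
  | RMu f => HM f (F f) end.

Fixpoint recf_eqb (a b : recf) : bool :=
  match a, b with
  | RZero, RZero => true | RSucc, RSucc => true | RProj i, RProj j => Nat.eqb i j
  | RComp f gs, RComp f' gs' => recf_eqb f f' &&
      (fix go l l' := match l, l' with [], [] => true | x :: l, y :: l' => recf_eqb x y && go l l' | _, _ => false end) gs gs'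
  | RPrim f g, RPrim f' g' => recf_eqb f f' && recf_eqb g g'
  | RMu f, RMu f' => recf_eqb f f'
  | _, _ => false end.

Lemma recf_eqb_eq a : forall b, recf_eqb a b = true -> a = b.
Proof.
  induction a using recf_ind'; intros [| |j|f' gs'|f' g'|f'] Hb; simpl in Hb; try discriminate; auto.
  - apply Nat.eqb_eq in Hb; subst; auto.
  - apply andb_true_iff in Hb as [H1 H2]. rewrite (IHa _ H1). f_equal.
    revert gs' H2; induction H; intros [|y l'] H2; try discriminate; auto.
    apply andb_true_iff in H2 as [H3 H4]. f_equal; auto.
  - apply andb_true_iff in Hb as [H1 H2]. f_equal; auto.
  - f_equal; auto.
Qed.

Lemma recf_eqb_refl a : recf_eqb a a = true.
Proof.
  induction a using recf_ind'; simpl; auto.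
  - apply Nat.eqb_refl.
  - rewrite IHa. simpl. induction H; simpl; auto. rewrite H. simpl. auto.
  - rewrite IHa1, IHa2; auto.
Qed.

Definition peqb (p q : recf * nat) : bool := recf_eqb (fst p) (fst q) && Nat.eqb (snd p) (snd q).
Lemma peqb_eq p q : peqb p q = true -> p = q.
Proof. destruct p, q; unfold peqb; simpl; intros H. apply andb_true_iff in H as [H1 H2].
  apply recf_eqb_eq in H1; apply Nat.eqb_eq in H2; subst; auto. Qed.
Lemma peqb_refl p : peqb p p = true.
Proof. destruct p; unfold peqb; simpl; rewrite recf_eqb_refl, Nat.eqb_refl; auto. Qed.

Fixpoint idx (p : recf * nat) (T : list (recf * nat)) : nat :=
  match T with [] => 0 | q :: T => if peqb p q then 0 else S (idx p T) end.

Lemma idx_spec p T : In p T -> idx p T < length T /\ nth (idx p T) T (RZero,0) = p.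
Proof.
  induction T as [|q T IH]; simpl; intros H; [contradiction|].
  destruct (peqb p q) eqn:E.
  - apply peqb_eq in E; subst; simpl; split; auto; lia.
  - destruct H as [H|H]. subst. rewrite peqb_refl in E; discriminate.
    destruct (IH H); simpl; split; auto; lia.
Qed.

Lemma idx_inj p q T : In p T -> In q T -> idx p T = idx q T -> p = q.
Proof. intros Hp Hq E. destruct (idx_spec p T Hp) as [_ A]. destruct (idx_spec q T Hq) as [_ B].
  rewrite <- A, <- B, E. auto. Qed.

Fixpoint subs (g : recf) (k : nat) : list (recf * nat) :=
  (g, k) :: match g with
  | RComp f gs => subs f (length gs) ++ flat_map (fun h => subs h k) gs
  | RPrim f h => subs f (k - 1) ++ subs h (S k)
  | RMu f => subs f (S k)
  | _ => [] end.

Definition closedT (T : list (recf * nat)) : Prop :=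
  forall g k, In (g, k) T ->
  match g with
  | RComp f gs => In (f, length gs) T /\ forall h, In h gs -> In (h, k) T
  | RPrim f h => In (f, k - 1) T /\ In (h, S k) T
  | RMu f => In (f, S k) T
  | _ => True end.

Lemma subs_closed_aux g : forall k g' k', In (g', k') (subs g k) ->
  match g' with
  | RComp f gs => In (f, length gs) (subs g k) /\ forall h, In h gs -> In (h, k') (subs g k)
  | RPrim f h => In (f, k' - 1) (subs g k) /\ In (h, S k') (subs g k)
  | RMu f => In (f, S k') (subs g k)
  | _ => True end.
Proof.
  induction g as [| |i|f gs IHf IHgs|f h IHf IHh|f IHf] using recf_ind'; intros k g' k' Hin; simpl in Hin.
  - destruct Hin as [E|[]]; inversion E; subst; auto.
  - destruct Hin as [E|[]]; inversion E; subst; auto.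
  - destruct Hin as [E|[]]; inversion E; subst; auto.
  - destruct Hin as [E|Hin].
    + inversion E; subst. simpl. split.
      * right. apply in_or_app. left. destruct f; simpl; auto.
      * intros h Hh. right. apply in_or_app. right. apply in_flat_map. exists h. split; auto.
        destruct h; simpl; auto.
    + assert (Hs : forall q, In q (subs f (length gs) ++ flat_map (fun h => subs h k) gs) -> In q (subs (RComp f gs) k)).
      { intros q Hq. simpl. right. auto. }
      apply in_app_or in Hin. destruct Hin as [Hin|Hin].
      * specialize (IHf _ _ _ Hin).
        assert (Hs' : forall q, In q (subs f (length gs)) -> In q (subs (RComp f gs) k)) by (intros; apply Hs; apply in_or_app; auto).
        destruct g'; auto; try (destruct IHf; split; auto).
      * apply in_flat_map in Hin. destruct Hin as [h [Hh Hin]].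
        rewrite Forall_forall in IHgs. specialize (IHgs h Hh _ _ _ Hin).
        assert (Hs' : forall q, In q (subs h k) -> In q (subs (RComp f gs) k)).
        { intros q Hq. apply Hs. apply in_or_app. right. apply in_flat_map. eauto. }
        destruct g'; auto; try (destruct IHgs; split; auto).
  - destruct Hin as [E|Hin].
    + inversion E; subst. simpl. split; right; apply in_or_app.
      * left. destruct f; simpl; auto.
      * right. destruct h; simpl; auto.
    + assert (Hs : forall q, In q (subs f (k - 1) ++ subs h (S k)) -> In q (subs (RPrim f h) k)).
      { intros q Hq. simpl. right. auto. }
      apply in_app_or in Hin. destruct Hin as [Hin|Hin].
      * specialize (IHf _ _ _ Hin). 
        assert (Hs' : forall q, In q (subs f (k-1)) -> In q (subs (RPrim f h) k)) by (intros; apply Hs; apply in_or_app; auto).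
        destruct g'; auto; try (destruct IHf; split; auto).
      * specialize (IHh _ _ _ Hin).
        assert (Hs' : forall q, In q (subs h (S k)) -> In q (subs (RPrim f h) k)) by (intros; apply Hs; apply in_or_app; auto).
        destruct g'; auto; try (destruct IHh; split; auto).
  - destruct Hin as [E|Hin].
    + inversion E; subst. simpl. right. destruct f; simpl; auto.
    + specialize (IHf _ _ _ Hin).
      assert (Hs' : forall q, In q (subs f (S k)) -> In q (subs (RMu f) k)) by (intros; simpl; auto).
      destruct g'; auto; try (destruct IHf; split; auto).
Qed.

Lemma subs_closed g k : closedT (subs g k).
Proof. intros g' k' H. apply (subs_closed_aux g k g' k' H). Qed.

Fixpoint mulc (n : nat) (t : term) : term := match n with 0 => TZero | S n => TAdd t (mulc n t) end.
Lemma eval_mulc rho n t : eval_term rho (mulc n t) = (Z.of_nat n * eval_term rho t)%Z.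
Proof. induction n; simpl mulc; cbn [eval_term]; [lia|]. rewrite IHn. lia. Qed.
Lemma eval_num rho n : eval_term rho (num n) = Z.of_nat n.
Proof. induction n; simpl; auto. rewrite IHn. lia. Qed.

Definition posT M u r := TAdd (mulc M u) (num r).
Lemma eval_posT rho M u r : eval_term rho (posT M u r) = (Z.of_nat M * eval_term rho u + Z.of_nat r)%Z.
Proof. unfold posT. cbn [eval_term]. rewrite eval_mulc, eval_num. auto. Qed.

Definition rdF M r u a := FAnd (FGe a TZero) (FAnd (FGe (TVar 0) (TAdd a TOne)) (FP (posT M (TAdd u a) r))).
Definition andi (F : nat -> form) n := fold_right FAnd FTrue (map F (seq 0 n)).
Definition factF M S t u k (A : nat -> term) y :=
  FAnd (FAnd (FGe u TZero) (FP (posT M u (t*S))))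
       (FAnd (rdF M (t*S+1) u y) (andi (fun j => rdF M (t*S+2+j) u (A j)) k)).

Definition rdZ (P : list Z) (G : Z) M r (u a : Z) : Prop :=
  (0 <= a /\ a + 1 <= G /\ In (Z.of_nat M * (u + a) + Z.of_nat r) P)%Z.
Definition FactZ P G M S t (u : Z) k (A : nat -> Z) (y : Z) : Prop :=
  ((0 <= u)%Z /\ In (Z.of_nat M * u + Z.of_nat (t*S))%Z P) /\ rdZ P G M (t*S+1) u y /\
  (forall j, j < k -> rdZ P G M (t*S+2+j) u (A j)).

Lemma holds_andi_aux P rho F n : forall s, holds P rho (fold_right FAnd FTrue (map F (seq s n))) <-> forall j, s <= j < s + n -> holds P rho (F j).
Proof.
  induction n as [|n IH]; intros s; simpl.
  - split; auto; intros; lia.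
  - rewrite IH. split.
    + intros [H1 H2] j Hj. destruct (Nat.eq_dec j s). subst; auto. apply H2; lia.
    + intros H; split. apply H; lia. intros j Hj; apply H; lia.
Qed.
Lemma holds_andi P rho F n : holds P rho (andi F n) <-> forall j, j < n -> holds P rho (F j).
Proof. unfold andi. rewrite holds_andi_aux. split; intros H j Hj; apply H; lia. Qed.

Lemma rdF_sem P rho M r u a : holds P rho (rdF M r u a) <-> rdZ P (rho 0) M r (eval_term rho u) (eval_term rho a).
Proof. unfold rdF, rdZ. cbn [holds]. rewrite eval_posT. cbn [eval_term]. split; intros; intuition lia. Qed.

Lemma factF_sem P rho M S t u k A y : holds P rho (factF M S t u k A y) <->
  FactZ P (rho 0) M S t (eval_term rho u) k (fun j => eval_term rho (A j)) (eval_term rho y).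
Proof.
  unfold factF, FactZ. cbn [holds]. rewrite holds_andi, rdF_sem, eval_posT.
  setoid_rewrite rdF_sem. cbn [eval_term]. split; intros; intuition lia.
Qed.

Lemma FactZ_ext P G M S t u k A A' y : (forall j, j < k -> A j = A' j) ->
  FactZ P G M S t u k A y -> FactZ P G M S t u k A' y.
Proof. unfold FactZ. intros E [H1 [H2 H3]]. split; [exact H1|split; [exact H2|]]. intros j Hj. rewrite <- E by auto. auto. Qed.

Definition ov (xs : list nat) (f rho : nat -> Z) : nat -> Z :=
  fun x => if in_dec Nat.eq_dec x xs then f x else rho x.
Definition alls xs p := fold_right FAll p xs.
Definition exs xs p := fold_right FEx p xs.

Lemma ov_nil f rho : ov [] f rho = rho.
Proof. apply functional_extensionality; intros; unfold ov; simpl; auto. Qed.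

Lemma ov_cons1 x xs f rho : ov xs f (update rho x (f x)) = ov (x :: xs) f rho.
Proof. apply functional_extensionality; intros y; unfold ov, update.
  destruct (in_dec Nat.eq_dec y xs) as [i1|n1]; destruct (in_dec Nat.eq_dec y (x :: xs)) as [i2|n2]; simpl in *; auto.
  - exfalso; auto.
  - destruct (Nat.eqb_spec y x); subst; auto. exfalso; destruct i2; auto.
  - destruct (Nat.eqb_spec y x); subst; auto. exfalso; auto. Qed.

Lemma ov_cons2 x xs f z rho : ov xs f (update rho x z) = ov (x :: xs) (fun y => if in_dec Nat.eq_dec y xs then f y else z) rho.
Proof. apply functional_extensionality; intros y; unfold ov, update.
  destruct (in_dec Nat.eq_dec y xs) as [i1|n1]; destruct (in_dec Nat.eq_dec y (x :: xs)) as [i2|n2]; simpl in *; auto.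
  - exfalso; auto.
  - destruct (Nat.eqb_spec y x); subst; auto. exfalso; destruct i2; auto.
  - destruct (Nat.eqb_spec y x); subst; auto. exfalso; auto. Qed.

Lemma holds_alls P xs : forall rho p, holds P rho (alls xs p) <-> forall f, holds P (ov xs f rho) p.
Proof.
  induction xs as [|x xs IH]; intros rho p; simpl.
  - split; intros H; [intros f; rewrite ov_nil; auto| specialize (H (fun _ => 0%Z)); rewrite ov_nil in H; auto].
  - split.
    + intros H f. rewrite <- ov_cons1. apply IH. apply H.
    + intros H z. apply IH. intros f. rewrite ov_cons2. apply H.
Qed.

Lemma holds_exs P xs : forall rho p, holds P rho (exs xs p) <-> exists f, holds P (ov xs f rho) p.
Proof.
  induction xs as [|x xs IH]; intros rho p; simpl.
  - split; intros H; [exists (fun _ => 0%Z); rewrite ov_nil; auto| destruct H as [f H]; rewrite ov_nil in H; auto].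
  - split.
    + intros [z H]. apply IH in H. destruct H as [f H]. rewrite ov_cons2 in H. eauto.
    + intros [f H]. exists (f x). apply IH. exists f. rewrite ov_cons1. auto.
Qed.

Lemma ov_in xs f rho x : In x xs -> ov xs f rho x = f x.
Proof. unfold ov; destruct (in_dec Nat.eq_dec x xs); tauto. Qed.
Lemma ov_out xs f rho x : ~ In x xs -> ov xs f rho x = rho x.
Proof. unfold ov; destruct (in_dec Nat.eq_dec x xs); tauto. Qed.

Definition avar j := 20 + 4 * j.
Definition wvar j := 21 + 4 * j.
Definition zvar j := 22 + 4 * j.
Definition ltF a b := FGe b (TAdd a TOne).
Definition consT (h : term) (A : nat -> term) j := match j with 0 => h | S j => A j end.
Definition consf (h : Z) (A : nat -> Z) j := match j with 0 => h | S j => A j end.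

Definition concF M St T (p : recf * nat) : form :=
  let (g, k) := p in
  let Av := fun j => TVar (avar j) in
  let At := fun j => TVar (avar (S j)) in
  let fa q := factF M St (idx q T) in
  match g with
  | RZero => FEq (TVar 5) TZero
  | RSucc => if k =? 0 then FFalse else FEq (TVar 5) (TAdd (Av 0) TOne)
  | RProj i => if i <? k then FEq (TVar 5) (Av i) else FFalse
  | RComp f gs =>
     FAnd (andi (fun j => FAnd (ltF (TVar (wvar j)) (TVar 4))
                 (fa (nth j gs RZero, k) (TVar (wvar j)) k Av (TVar (zvar j)))) (length gs))
          (FAnd (ltF (TVar (wvar (length gs))) (TVar 4))
                (fa (f, length gs) (TVar (wvar (length gs))) (length gs) (fun j => TVar (zvar j)) (TVar 5)))
  | RPrim f h => if k =? 0 then FFalse else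
     FOr (FAnd (FEq (Av 0) TZero) (FAnd (ltF (TVar (wvar 0)) (TVar 4)) (fa (f, k-1) (TVar (wvar 0)) (k-1) At (TVar 5))))
         (FAnd (FEq (Av 0) (TAdd (TVar 7) TOne))
           (FAnd (ltF (TVar (wvar 0)) (TVar 4))
             (FAnd (fa (RPrim f h, k) (TVar (wvar 0)) k (consT (TVar 7) At) (TVar 8))
               (FAnd (ltF (TVar (wvar 1)) (TVar 4))
                 (fa (h, S k) (TVar (wvar 1)) (S k) (consT (TVar 7) (consT (TVar 8) At)) (TVar 5))))))
  | RMu f =>
     FAnd (FAnd (ltF (TVar (wvar 0)) (TVar 4)) (fa (f, S k) (TVar (wvar 0)) (S k) (consT (TVar 5) Av) TZero))
          (FImp (FAnd (FGe (TVar 6) TZero) (ltF (TVar 6) (TVar 5)))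
             (FAnd (ltF (TVar (wvar 1)) (TVar 4))
               (FAnd (FGe (TVar (zvar 0)) TOne)
                  (fa (f, S k) (TVar (wvar 1)) (S k) (consT (TVar 6) Av) (TVar (zvar 0))))))
  end.

Definition concZ P G M St T (p : recf * nat) (u y m n' r : Z) (A W Zs : nat -> Z) : Prop :=
  let (g, k) := p in
  let fz q := FactZ P G M St (idx q T) in
  match g with
  | RZero => y = 0%Z
  | RSucc => if k =? 0 then False else y = (A 0%nat + 1)%Z
  | RProj i => if i <? k then y = A i else False
  | RComp f gs =>
     (forall j, j < length gs -> (W j < u)%Z /\ fz (nth j gs RZero, k) (W j) k A (Zs j)) /\
     ((W (length gs) < u)%Z /\ fz (f, length gs) (W (length gs)) (length gs) Zs y)
  | RPrim f h => if k =? 0 then False else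
     (A 0 = 0%Z /\ (W 0%nat < u)%Z /\ fz (f, k-1) (W 0) (k-1) (fun j => A (S j)) y) \/
     (A 0 = (n' + 1)%Z /\ (W 0%nat < u)%Z /\ fz (RPrim f h, k) (W 0) k (consf n' (fun j => A (S j))) r /\
      (W 1%nat < u)%Z /\ fz (h, S k) (W 1) (S k) (consf n' (consf r (fun j => A (S j)))) y)
  | RMu f =>
     ((W 0%nat < u)%Z /\ fz (f, S k) (W 0) (S k) (consf y A) 0%Z) /\
     ((0 <= m /\ m < y)%Z -> (W 1%nat < u)%Z /\ (1 <= Zs 0%nat)%Z /\ fz (f, S k) (W 1) (S k) (consf m A) (Zs 0))
  end.

Lemma FactZ_iff P G M St t u u' k A A' y y' : u = u' -> y = y' -> (forall j, j < k -> A j = A' j) ->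
  (FactZ P G M St t u k A y <-> FactZ P G M St t u' k A' y').
Proof. intros -> -> E. split; apply FactZ_ext; intros; [|symmetry]; auto. Qed.

Definition arity_ok St (p : recf * nat) : Prop :=
  snd p + 2 <= St /\ match fst p with RComp _ gs => length gs + 2 <= St | _ => True end.

Lemma concF_sem P rho M St T p G u y m n' r A W Zs :
  arity_ok St p ->
  rho 0 = G -> rho 4 = u -> rho 5 = y -> rho 6 = m -> rho 7 = n' -> rho 8 = r ->
  (forall j, j < St -> rho (avar j) = A j) ->
  (forall j, j <= St -> rho (wvar j) = W j /\ rho (zvar j) = Zs j) ->
  (holds P rho (concF M St T p) <-> concZ P G M St T p u y m n' r A W Zs).
Proof.
  destruct p as [g k]. intros [Hk Hc] H0 H4 H5 H6 H7 H8 HA HW. simpl in Hk, Hc.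
  assert (HWj : forall j, j <= St -> rho (wvar j) = W j) by (intros j Hj; apply HW; auto).
  assert (HZj : forall j, j <= St -> rho (zvar j) = Zs j) by (intros j Hj; apply HW; auto).
  destruct g as [| |i|f gs|f h|f]; unfold concF, concZ, ltF; cbn [holds eval_term].
  - rewrite H5. tauto.
  - destruct (k =? 0) eqn:E; cbn [holds eval_term]. tauto. rewrite H5, HA by lia. tauto.
  - destruct (i <? k) eqn:E; cbn [holds eval_term]. 2: tauto. apply Nat.ltb_lt in E. rewrite H5, HA by lia. tauto.
  - rewrite holds_andi. cbn [holds eval_term]. rewrite factF_sem. cbn [eval_term].
    rewrite H0, H4, H5, HWj by lia.
    split.
    + intros [H1 [H2 H3]]. split.
      * intros j Hj. specialize (H1 j Hj). cbn [holds eval_term] in H1. rewrite factF_sem in H1.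
        cbn [eval_term] in H1. rewrite ?H0, ?HWj, ?HZj, ?H4 in H1 by lia. destruct H1 as [H1a H1b]. split; [lia|].
        eapply FactZ_ext; [|exact H1b]; intros j' Hj'; cbv beta; rewrite ?HA, ?HZj by lia; reflexivity.
      * split; [lia|].
        eapply FactZ_ext; [|exact H3]; intros j' Hj'; cbv beta; rewrite ?HA, ?HZj by lia; reflexivity.
    + intros [H1 [H2 H3]]. split; [|split].
      * intros j Hj. destruct (H1 j Hj) as [H1a H1b]. cbn [holds eval_term]. rewrite factF_sem.
        cbn [eval_term]. rewrite ?H0, ?HWj, ?HZj, ?H4 by lia. split; [lia|].
        eapply FactZ_ext; [|exact H1b]; intros j' Hj'; cbv beta; rewrite ?HA, ?HZj by lia; reflexivity.
      * lia.
      * eapply FactZ_ext; [|exact H3]; intros j' Hj'; cbv beta; rewrite ?HA, ?HZj by lia; reflexivity.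
  - destruct (k =? 0) eqn:E; cbn [holds eval_term]. tauto. apply Nat.eqb_neq in E.
    rewrite !factF_sem. cbn [eval_term]. rewrite H0, H4, H5, H7, H8, !HWj, !HA by lia.
    assert (EA1 : forall j, j < k - 1 -> eval_term rho (TVar (avar (S j))) = A (S j)) by (intros; simpl; apply HA; lia).
    assert (EA2 : forall j, j < k -> eval_term rho (consT (TVar 7) (fun j => TVar (avar (S j))) j) = consf n' (fun j => A (S j)) j)
      by (intros [|j] Hj; simpl; auto; apply HA; lia).
    assert (EA3 : forall j, j < S k -> eval_term rho (consT (TVar 7) (consT (TVar 8) (fun j => TVar (avar (S j)))) j) = consf n' (consf r (fun j => A (S j))) j)
      by (intros [|[|j]] Hj; simpl; auto; apply HA; lia).
    rewrite (FactZ_iff _ _ _ _ _ _ _ _ _ _ _ _ eq_refl eq_refl EA1).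
    rewrite (FactZ_iff _ _ _ _ _ _ _ _ _ _ _ _ eq_refl eq_refl EA2).
    rewrite (FactZ_iff _ _ _ _ _ _ _ _ _ _ _ _ eq_refl eq_refl EA3).
    split; intros; intuition lia.
  - rewrite !factF_sem. cbn [eval_term]. rewrite H0, H4, H5, H6, !HWj, !HZj by lia.
    assert (EA1 : forall j, j < S k -> eval_term rho (consT (TVar 5) (fun j => TVar (avar j)) j) = consf y A j)
      by (intros [|j] Hj; simpl; auto; apply HA; lia).
    assert (EA2 : forall j, j < S k -> eval_term rho (consT (TVar 6) (fun j => TVar (avar j)) j) = consf m A j)
      by (intros [|j] Hj; simpl; auto; apply HA; lia).
    rewrite (FactZ_iff _ _ _ _ _ _ _ _ _ _ _ _ eq_refl eq_refl EA1).
    rewrite (FactZ_iff _ _ _ _ _ _ _ _ _ _ _ _ eq_refl eq_refl EA2).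
    split.
    + intros [[Ha Hb] Hq]. split. split; [lia|auto]. intros Hm.
      destruct Hq as [Hq1 [Hq2 Hq3]]; [lia|]. split; [lia|split;[lia|auto]].
    + intros [[Ha Hb] Hq]. split. split; [lia|auto]. intros Hm.
      destruct Hq as [Hq1 [Hq2 Hq3]]; [lia|]. split; [lia|split;[lia|auto]].
Qed.

Definition Cj M St T (p : recf * nat) : form :=
  FImp (FAnd (FEq (TVar 3) (num (idx p T)))
             (factF M St (idx p T) (TVar 4) (snd p) (fun j => TVar (avar j)) (TVar 5)))
       (concF M St T p).
Definition Top M St := factF M St 0 (TVar 2) 1 (fun _ => TVar 1) TZero.
Definition XA St := [3;4;5;6] ++ map avar (seq 0 St).
Definition XE St := [7;8] ++ map wvar (seq 0 (S St)) ++ map zvar (seq 0 (S St)).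
Definition SS (T : list (recf * nat)) := 2 + list_max (map snd T).
Definition Matrix M St T := FAnd (Top M St) (fold_right FAnd FTrue (map (Cj M St T) T)).
Definition Theta (g : recf) : form :=
  let T := subs g 1 in let St := SS T in let M := St * length T in
  alls (XA St) (exs (XE St) (Matrix M St T)).

Lemma qfree_andi F n : (forall j, qfree (F j)) -> qfree (andi F n).
Proof. intros H. unfold andi. generalize (seq 0 n). induction l; simpl; auto. Qed.
Lemma qfree_factF M St t u k A y : qfree (factF M St t u k A y).
Proof. unfold factF. simpl. repeat split; auto. apply qfree_andi. intros; simpl; auto. Qed.
Lemma qfree_fold_map {X} (F : X -> form) l : (forall j, qfree (F j)) -> qfree (fold_right FAnd FTrue (map F l)).
Proof. intros H; induction l; simpl; auto. Qed.
Lemma qfree_ltF a b : qfree (ltF a b).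
Proof. simpl; auto. Qed.
Lemma qfree_andi_fa M St T k n (F : nat -> recf*nat) (u z : nat -> term) (A : nat -> term) :
  qfree (andi (fun j => FAnd (ltF (u j) (TVar 4)) (factF M St (idx (F j) T) (u j) k A (z j))) n).
Proof. apply qfree_andi. intros; cbn [qfree]; split; [apply qfree_ltF|apply qfree_factF]. Qed.
Arguments factF : simpl never. Arguments andi : simpl never. Arguments ltF : simpl never.
Lemma qfree_concF M St T p : qfree (concF M St T p).
Proof.
  destruct p as [g k]; destruct g as [| |i|f l|f h|f]; unfold concF; simpl;
    repeat match goal with |- context [if ?b then _ else _] => destruct b end; simpl;
    repeat (first [exact I | match goal with |- qfree (factF _ _ _ _ _ _ _) => apply qfree_factF end
                   | match goal with |- qfree (ltF _ _) => apply qfree_ltF end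
                   | match goal with |- qfree (andi _ _) => apply qfree_andi; intros; simpl; tauto end
                   | match goal with |- qfree (fold_right FAnd FTrue (map _ _)) => apply qfree_fold_map; intros; simpl; tauto end
                   | split]).
  apply (qfree_andi_fa M St T k (length l) (fun j => (nth j l RZero, k)) (fun j => TVar (wvar j)) (fun j => TVar (zvar j))).
Qed.

Lemma qfree_Matrix M St T : qfree (Matrix M St T).
Proof. unfold Matrix. cbn [qfree]. split. apply qfree_factF.
  apply qfree_fold_map. intros p. unfold Cj. cbn [qfree].
  split; [split; [exact I|apply qfree_factF]|apply qfree_concF]. Qed.

Lemma prefix_Theta g : prefix_AE (Theta g).
Proof.
  unfold Theta. unfold alls, exs; cbv zeta. generalize (XA (SS (subs g 1))). intros l. induction l; cbn [fold_right].
  - apply pAE_E. generalize (XE (SS (subs g 1))). intros l. induction l; cbn [fold_right].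
    + apply pE_qf. apply qfree_Matrix.
    + apply pE_ex. auto.
  - apply pAE_all. auto.
Qed.

Lemma in_class_F g x : in_class (FAnd (FEq (TVar 1) (num x)) (Theta g)).
Proof. exists (FEq (TVar 1) (num x)), (Theta g). split; auto. split.
  apply pEA_A. apply pA_qf. simpl; auto. apply prefix_Theta. Qed.

Lemma in_map_seq_iff (h : nat -> nat) n x : (forall a b, h a = h b -> a = b) ->
  In x (map h (seq 0 n)) <-> exists j, j < n /\ x = h j.
Proof. intros Hi. rewrite in_map_iff. split.
  - intros [j [E Hj]]. apply in_seq in Hj. exists j; split; [lia|auto].
  - intros [j [Hj E]]. exists j; split; auto. apply in_seq; lia. Qed.

Lemma XA_iff St x : In x (XA St) <-> x = 3 \/ x = 4 \/ x = 5 \/ x = 6 \/ exists j, j < St /\ x = avar j.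
Proof. unfold XA. rewrite in_app_iff, in_map_seq_iff by (unfold avar; intros; lia). simpl. intuition. Qed.
Lemma XE_iff St x : In x (XE St) <-> x = 7 \/ x = 8 \/ (exists j, j < S St /\ x = wvar j) \/ (exists j, j < S St /\ x = zvar j).
Proof. unfold XE. rewrite !in_app_iff, !in_map_seq_iff by (unfold wvar, zvar; intros; lia). simpl. intuition. Qed.

Lemma val_lemma St fA gE rho x :
  let rho' := ov (XE St) gE (ov (XA St) fA rho) in
  (x <= 2 -> rho' x = rho x) /\
  (3 <= x <= 6 -> rho' x = fA x) /\
  (7 <= x <= 8 -> rho' x = gE x) /\
  (forall j, j < St -> rho' (avar j) = fA (avar j)) /\
  (forall j, j <= St -> rho' (wvar j) = gE (wvar j) /\ rho' (zvar j) = gE (zvar j)).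
Proof.
  intros rho'. unfold rho'. repeat split.
  - intros H. rewrite ov_out, ov_out; auto.
    + rewrite XA_iff. unfold avar. intros [?|[?|[?|[?|[j3 [? ?]]]]]]; lia.
    + rewrite XE_iff. unfold wvar, zvar. intros [?|[?|[[j1 [? ?]]|[j2 [? ?]]]]]; lia.
  - intros H. rewrite ov_out, ov_in; auto.
    + rewrite XA_iff. lia.
    + rewrite XE_iff. unfold wvar, zvar. intros [?|[?|[[j1 [? ?]]|[j2 [? ?]]]]]; lia.
  - intros H. rewrite ov_in; auto. rewrite XE_iff. lia.
  - intros j Hj. rewrite ov_out, ov_in; auto.
    + rewrite XA_iff. right; right; right; right. eauto.
    + rewrite XE_iff. unfold wvar, zvar, avar. intros [?|[?|[[j' [? ?]]|[j' [? ?]]]]]; lia.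
  - rewrite ov_in; auto. rewrite XE_iff. right; right; left. exists j; split; auto; lia.
  - rewrite ov_in; auto. rewrite XE_iff. right; right; right. exists j; split; auto; lia.
Qed.

Lemma holds_fold_map {X} P rho (F : X -> form) l :
  holds P rho (fold_right FAnd FTrue (map F l)) <-> forall x, In x l -> holds P rho (F x).
Proof. induction l; simpl. split; auto; intros _ x []. rewrite IHl. split.
  - intros [H1 H2] x [E|Hx]; subst; auto.
  - intros H; split; auto. Qed.

Lemma avar_div j : (avar j - 20) / 4 = j.
Proof. unfold avar. replace (20 + 4 * j - 20) with (j * 4) by lia. apply Nat.div_mul. lia. Qed.

Definition mkfA (s u y m : Z) (A : nat -> Z) : nat -> Z :=
  fun x => match x with 3 => s | 4 => u | 5 => y | 6 => m | _ => A ((x - 20) / 4) end.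
Lemma mkfA_avar s u y m A j : mkfA s u y m A (avar j) = A j.
Proof. rewrite <- (avar_div j) at 2. unfold mkfA, avar. reflexivity. Qed.

Lemma arity_ok_T g p : In p (subs g 1) -> arity_ok (SS (subs g 1)) p.
Proof.
  intros Hp. unfold arity_ok, SS.
  assert (Hm : forall q, In q (subs g 1) -> snd q <= list_max (map snd (subs g 1))).
  { intros q Hq. pose proof (proj1 (list_max_le (map snd (subs g 1)) _) (le_n _)) as HF.
    rewrite Forall_forall in HF. apply HF. apply in_map; auto. }
  split. specialize (Hm p Hp); lia.
  destruct p as [g' k]; simpl. destruct g'; auto.
  pose proof (subs_closed g 1 _ _ Hp) as [Hf _]. specialize (Hm _ Hf). simpl in Hm. lia.
Qed.

Lemma step_lemma P rho g : holds P rho (Theta g) ->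
  let T := subs g 1 in let St := SS T in let M := St * length T in
  (FactZ P (rho 0) M St 0 (rho 2) 1 (fun _ => rho 1) 0%Z) /\
  (forall p u A y m, In p T -> FactZ P (rho 0) M St (idx p T) u (snd p) A y ->
   exists W Zs n' r, concZ P (rho 0) M St T p u y m n' r A W Zs).
Proof.
  intros H T St M. unfold Theta in H. cbv zeta in H. fold T St M in H.
  rewrite holds_alls in H. split.
  - specialize (H (fun _ => 0%Z)). rewrite holds_exs in H. destruct H as [gE H].
    unfold Matrix in H. cbn [holds] in H. destruct H as [H _]. unfold Top in H.
    rewrite factF_sem in H. 
    pose proof (val_lemma St (fun _ => 0%Z) gE rho) as V.
    cbn [eval_term] in H. rewrite (proj1 (V 0)), (proj1 (V 2)) in H by lia.
    eapply FactZ_ext; [|exact H]. intros j Hj. simpl. apply (proj1 (V 1)). lia.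
  - intros p u A y m Hp HF.
    specialize (H (mkfA (Z.of_nat (idx p T)) u y m A)). rewrite holds_exs in H. destruct H as [gE H].
    unfold Matrix in H. cbn [holds] in H. destruct H as [_ H]. rewrite holds_fold_map in H.
    specialize (H p Hp). unfold Cj in H. cbn [holds] in H.
    set (rho' := ov (XE St) gE (ov (XA St) (mkfA (Z.of_nat (idx p T)) u y m A) rho)) in H.
    pose proof (fun x => val_lemma St (mkfA (Z.of_nat (idx p T)) u y m A) gE rho x) as V.
    fold rho' in V.
    pose proof (arity_ok_T g p Hp) as Ha. fold T St in Ha.
    assert (Hk : snd p + 2 <= St) by apply Ha.
    exists (fun j => gE (wvar j)), (fun j => gE (zvar j)), (gE 7), (gE 8).
    rewrite <- (concF_sem P rho' M St T p (rho 0) u y m (gE 7) (gE 8) A (fun j => gE (wvar j)) (fun j => gE (zvar j))); auto.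
    + apply H. split.
      * rewrite eval_num. cbn [eval_term]. rewrite (proj1 (proj2 (V 3))) by lia. reflexivity.
      * rewrite factF_sem. cbn [eval_term].
        rewrite (proj1 (V 0)), (proj1 (proj2 (V 4))), (proj1 (proj2 (V 5))) by lia.
        eapply FactZ_ext; [|exact HF]. intros j Hj.
        rewrite (proj1 (proj2 (proj2 (proj2 (V 0))))) by lia. rewrite mkfA_avar. reflexivity.
    + destruct (V 0) as [V0 _]. apply V0; lia.
    + destruct (V 4) as [_ [V0 _]]. apply V0; lia.
    + destruct (V 5) as [_ [V0 _]]. apply V0; lia.
    + destruct (V 6) as [_ [V0 _]]. apply V0; lia.
    + intros j Hj. destruct (V 0) as [_ [_ [_ [V0 _]]]]. rewrite V0 by lia. apply mkfA_avar.
    + intros j Hj. destruct (V 0) as [_ [_ [_ [_ V0]]]]. apply V0; lia.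
Qed.

Definition args (A : nat -> Z) k := map (fun j => Z.to_nat (A j)) (seq 0 k).
Lemma args_S A k : args A (S k) = Z.to_nat (A 0) :: args (fun j => A (S j)) k.
Proof. unfold args. simpl. f_equal. rewrite <- seq_shift, map_map. auto. Qed.
Lemma args_ext A A' k : (forall j, j < k -> A j = A' j) -> args A k = args A' k.
Proof. intros H. unfold args. apply map_ext_in. intros j Hj. apply in_seq in Hj. rewrite H by lia. auto. Qed.
Lemma args_len A k : length (args A k) = k.
Proof. unfold args. rewrite length_map, length_seq. auto. Qed.
Lemma args_nth A k i : i < k -> nth i (args A k) 0 = Z.to_nat (A i).
Proof. intros H. unfold args. rewrite (nth_indep _ _ ((fun j => Z.to_nat (A j)) 0)) by (rewrite length_map, length_seq; auto).
  rewrite (map_nth (fun j => Z.to_nat (A j))), seq_nth by auto. auto. Qed.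

Lemma revals_seq gs v (F : nat -> nat) : (forall j, j < length gs -> reval (nth j gs RZero) v (F j)) ->
  revals gs v (map F (seq 0 (length gs))).
Proof.
  revert F; induction gs as [|h gs IH]; intros F H; simpl. constructor.
  constructor. apply (H 0); simpl; lia.
  rewrite <- seq_shift, map_map. apply IH. intros j Hj. apply (H (S j)). simpl; lia.
Qed.

Lemma FactZ_nonneg P G M St t u k A y : FactZ P G M St t u k A y ->
  (0 <= u)%Z /\ (0 <= y)%Z /\ forall j, j < k -> (0 <= A j)%Z.
Proof. unfold FactZ, rdZ. intros [[H1 _] [H2 H3]]. split; [auto|split;[tauto|]]. intros j Hj. apply H3; auto. Qed.

Lemma soundness P rho g : holds P rho (Theta g) ->
  let T := subs g 1 in let St := SS T in let M := St * length T in
  forall N p u A y, In p T -> Z.to_nat u < N -> FactZ P (rho 0) M St (idx p T) u (snd p) A y ->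
  reval (fst p) (args A (snd p)) (Z.to_nat y).
Proof.
  intros HT T St M. destruct (step_lemma P rho g HT) as [_ Hstep]. fold T St M in Hstep. clear HT.
  pose proof (subs_closed g 1) as Hcl. fold T in Hcl.
  induction N as [|N IH]; intros p u A y Hp HN HF; [lia|].
  destruct (FactZ_nonneg _ _ _ _ _ _ _ _ _ HF) as (Hu & Hy & HA).
  destruct p as [g' k]. simpl in *.
  destruct (Hstep _ _ _ _ 0%Z Hp HF) as (W & Zs & n' & r & HC).
  pose proof (Hcl _ _ Hp) as Hch.
  assert (IH' : forall q w B z, In q T -> (0 <= w < u)%Z -> FactZ P (rho 0) M St (idx q T) w (snd q) B z ->
                 reval (fst q) (args B (snd q)) (Z.to_nat z)).
  { intros q w B z Hq Hw HB. apply (IH q w); auto. lia. }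
  destruct g' as [| |i|f gs|f h|f]; simpl in HC.
  - subst. constructor.
  - destruct k as [|k]; simpl in HC; [contradiction|]. rewrite args_S.
    assert (0 <= A 0%nat)%Z by (apply HA; lia).
    replace (Z.to_nat y) with (S (Z.to_nat (A 0))) by lia. constructor.
  - destruct (i <? k) eqn:E; [|contradiction]. apply Nat.ltb_lt in E. subst.
    rewrite <- args_nth with (k := k) by auto. constructor. rewrite args_len; auto.
  - destruct HC as [HC1 [HC2 HC3]]. destruct Hch as [Hf Hgs].
    apply ev_comp with (ys := args Zs (length gs)).
    + apply revals_seq. intros j Hj. destruct (HC1 j Hj) as [Hw Hfj].
      destruct (FactZ_nonneg _ _ _ _ _ _ _ _ _ Hfj) as (Hw0 & Hz0 & _).
      apply (IH' (nth j gs RZero, k) (W j) A (Zs j)); auto.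
      all: try (apply Hgs; apply nth_In; auto); try lia.
    + destruct (FactZ_nonneg _ _ _ _ _ _ _ _ _ HC3) as (Hw0 & _ & _).
      apply (IH' (f, length gs) (W (length gs)) Zs y); auto; lia.
  - destruct k as [|k]; simpl in HC; [contradiction|]. destruct Hch as [Hf Hh].
    rewrite args_S. simpl in Hf.
    destruct HC as [(H0 & Hw & Hfa) | (H0 & Hw & Hfa & Hw1 & Hfb)].
    + rewrite H0. simpl. constructor.
      destruct (FactZ_nonneg _ _ _ _ _ _ _ _ _ Hfa) as (Hw0 & _ & _).
      rewrite Nat.sub_0_r in Hfa, Hf.
      apply (IH' (f, k) (W 0) (fun j => A (S j)) y Hf ltac:(lia) Hfa).
    + destruct (FactZ_nonneg _ _ _ _ _ _ _ _ _ Hfa) as (Hw0 & Hr0 & Hn0).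
      destruct (FactZ_nonneg _ _ _ _ _ _ _ _ _ Hfb) as (Hw10 & _ & _).
      assert (Hn' : (0 <= n')%Z) by (apply (Hn0 0); lia).
      replace (Z.to_nat (A 0)) with (S (Z.to_nat n')) by lia.
      apply ev_primS with (r := Z.to_nat r).
      * pose proof (IH' (RPrim f h, S k) (W 0) _ r Hp ltac:(lia) Hfa) as R. simpl in R.
        rewrite args_S in R. simpl in R. exact R.
      * pose proof (IH' (h, S (S k)) (W 1) _ y Hh ltac:(lia) Hfb) as R. simpl in R.
        rewrite !args_S in R. simpl in R. exact R.
  - destruct HC as [[Hw Hfa] _].
    destruct (FactZ_nonneg _ _ _ _ _ _ _ _ _ Hfa) as (Hw0 & _ & _).
    pose proof (IH' (f, S k) (W 0) _ 0%Z Hch ltac:(lia) Hfa) as R0. simpl in R0. rewrite args_S in R0. simpl in R0.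
    apply ev_mu; [exact R0|].
    intros m Hm.
    destruct (Hstep _ _ _ _ (Z.of_nat m) Hp HF) as (W' & Zs' & n'' & r' & HC'). simpl in HC'.
    destruct HC' as [_ HC']. destruct HC' as (Hw1 & Hz1 & Hfb); [lia|].
    destruct (FactZ_nonneg _ _ _ _ _ _ _ _ _ Hfb) as (Hw10 & _ & _).
    pose proof (IH' (f, S k) (W' 1) _ _ Hch ltac:(lia) Hfb) as R1. simpl in R1. rewrite args_S in R1. simpl in R1.
    rewrite Nat2Z.id in R1. exists (Z.to_nat (Zs' 0) - 1).
    replace (S (Z.to_nat (Zs' 0) - 1)) with (Z.to_nat (Zs' 0)) by lia. exact R1.
Qed.

Definition fact := ((recf * nat) * list nat * nat)%type.

Definition Local (x : fact) (L : list fact) : Prop :=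
  let '(p, v, y) := x in let (g, k) := p in
  match g with
  | RZero => y = 0
  | RSucc => k <> 0 /\ y = S (nth 0 v 0)
  | RProj i => i < k /\ y = nth i v 0
  | RComp f gs => exists zs, length zs = length gs /\
      (forall j, j < length gs -> In ((nth j gs RZero, k), v, nth j zs 0) L) /\
      In ((f, length gs), zs, y) L
  | RPrim f h => k <> 0 /\
      ((nth 0 v 0 = 0 /\ In ((f, k - 1), tl v, y) L) \/
       (exists n r, nth 0 v 0 = S n /\ In ((RPrim f h, k), n :: tl v, r) L /\ In ((h, S k), n :: r :: tl v, y) L))
  | RMu f => In ((f, S k), y :: v, 0) L /\ forall m, m < y -> exists z, In ((f, S k), m :: v, S z) L
  end.

Lemma Local_mono x L L' : (forall d, In d L -> In d L') -> Local x L -> Local x L'.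
Proof.
  intros Hs. destruct x as [[[g k] v] y]. destruct g; simpl; auto.
  - intros [zs (H1 & H2 & H3)]. exists zs. repeat split; auto.
  - intros [Hk H]. split; auto. destruct H as [[H1 H2]|(n & r & H1 & H2 & H3)]; [left|right]; eauto 10.
  - intros [H1 H2]. split; auto. intros m Hm. destruct (H2 m Hm) as [z Hz]; eauto.
Qed.

Inductive good (T : list (recf * nat)) : list fact -> Prop :=
| good_nil : good T []
| good_cons x L : good T L -> Local x L -> In (fst (fst x)) T -> length (snd (fst x)) = snd (fst (fst x)) -> good T (x :: L).

Lemma good_app T L1 L2 : good T L1 -> good T L2 -> good T (L1 ++ L2).
Proof.
  induction 1 as [|x L HL IHL HLoc HT HLen]; simpl; auto. intros H2. constructor; auto.
  eapply Local_mono; [|eauto]. intros d Hd. apply in_or_app; auto.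
Qed.

Lemma good_one T x : Local x [] -> In (fst (fst x)) T -> length (snd (fst x)) = snd (fst (fst x)) -> good T [x].
Proof. intros. constructor; auto. constructor. Qed.

Fixpoint build T (Hcl : closedT T) g v y (H : reval g v y) {struct H} :
  In (g, length v) T -> exists L, good T L /\ In ((g, length v), v, y) L
with builds T (Hcl : closedT T) gs v ys (H : revals gs v ys) {struct H} :
  (forall h, In h gs -> In (h, length v) T) ->
  exists L, good T L /\ length ys = length gs /\
    forall j, j < length gs -> In ((nth j gs RZero, length v), v, nth j ys 0) L.
Proof.
  - destruct H as [v|x v|i v Hi|f gs v ys z Hs Hf|f h v y Hf|f h n v r y Hr Hh|f v n H0 Hm]; intros Hin.
    + exists [((RZero, length v), v, 0)]. split; [apply good_one; simpl; auto|simpl; auto].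
    + exists [((RSucc, length (x :: v)), x :: v, S x)]. split; [apply good_one; simpl; auto|simpl; auto].
    + exists [((RProj i, length v), v, nth i v 0)]. split; [apply good_one; simpl; auto|simpl; auto].
    + pose proof (Hcl _ _ Hin) as [Hcf Hcg].
      destruct (builds T Hcl _ _ _ Hs Hcg) as (L1 & G1 & Hlen & HL1).
      destruct (build T Hcl _ _ _ Hf) as (L2 & G2 & HL2). rewrite Hlen; auto.
      exists (((RComp f gs, length v), v, z) :: (L1 ++ L2)). split; [|left; auto].
      constructor; auto. apply good_app; auto.
      simpl. exists ys. repeat split; auto.
      * intros j Hj. apply in_or_app. left. auto.
      * apply in_or_app. right. rewrite <- Hlen. auto.
    + simpl in Hin. pose proof (Hcl _ _ Hin) as [Hcf Hch]. simpl in Hcf. rewrite Nat.sub_0_r in Hcf.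
      destruct (build T Hcl _ _ _ Hf Hcf) as (L1 & G1 & HL1).
      exists (((RPrim f h, length (0 :: v)), 0 :: v, y) :: L1). split; [|left; auto].
      constructor; auto. simpl. split; [lia|]. left. split; auto. rewrite Nat.sub_0_r. auto.
    + simpl in Hin. pose proof (Hcl _ _ Hin) as [Hcf Hch].
      destruct (build T Hcl _ _ _ Hr Hin) as (L1 & G1 & HL1).
      destruct (build T Hcl _ _ _ Hh Hch) as (L2 & G2 & HL2).
      exists (((RPrim f h, length (S n :: v)), S n :: v, y) :: (L1 ++ L2)). split; [|left; auto].
      constructor; auto. apply good_app; auto. simpl. split; [lia|]. right. exists n, r.
      split; auto. split; apply in_or_app; auto.
    + pose proof (Hcl _ _ Hin) as Hcf.
      destruct (build T Hcl _ _ _ H0 Hcf) as (L0 & G0 & HL0).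
      assert (Hcoll : forall n', n' <= n -> exists L, good T L /\
                forall m, m < n' -> exists z, In ((f, S (length v)), m :: v, S z) L).
      { induction n' as [|n' IHn]; intros Hn'.
        - exists []. split. constructor. intros; lia.
        - destruct IHn as (L1 & G1 & HL1); [lia|].
          destruct (Hm n' ltac:(lia)) as [z Hz].
          destruct (build T Hcl _ _ _ Hz Hcf) as (L2 & G2 & HL2).
          exists (L1 ++ L2). split. apply good_app; auto.
          intros m Hm'. destruct (Nat.eq_dec m n').
          + subst. exists z. apply in_or_app; right; auto.
          + destruct (HL1 m ltac:(lia)) as [z' Hz']. exists z'. apply in_or_app; left; auto. }
      destruct (Hcoll n (le_n _)) as (L1 & G1 & HL1).
      exists (((RMu f, length v), v, n) :: (L0 ++ L1)). split; [|left; auto].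
      constructor; auto. apply good_app; auto. simpl. split.
      * apply in_or_app; left; auto.
      * intros m Hm'. destruct (HL1 m Hm') as [z Hz]. exists z. apply in_or_app; right; auto.
  - destruct H as [v|h gs v y ys Hh Hs]; intros Hin.
    + exists []. split. constructor. simpl. split; auto. intros; lia.
    + destruct (build T Hcl _ _ _ Hh (Hin h (or_introl eq_refl))) as (L1 & G1 & HL1).
      destruct (builds T Hcl _ _ _ Hs (fun h' H' => Hin h' (or_intror H'))) as (L2 & G2 & Hlen & HL2).
      exists (L1 ++ L2). split. apply good_app; auto. simpl. split; [lia|].
      intros [|j] Hj; apply in_or_app; [left; auto|right; apply HL2; lia].
Qed.

Lemma uniq (M X X' r r' : Z) : (0 <= r < M)%Z -> (0 <= r' < M)%Z -> (M * X + r = M * X' + r')%Z -> X = X' /\ r = r'.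
Proof. intros. assert (X = X') by nia. subst. lia. Qed.

Definition fsize (x : fact) := snd x + list_sum (snd (fst x)).
Definition GvL (L : list fact) := S (list_sum (map fsize L)).
Definition pos (Gv N i : nat) : Z := Z.of_nat ((N - i) * Gv).
Definition dflt : fact := ((RZero, 0), [], 0).
Definition pts M St T Gv N i (x : fact) : list Z :=
  let '(p, v, y) := x in let t := idx p T in let u := pos Gv N i in
  (Z.of_nat M * u + Z.of_nat (t * St))%Z :: (Z.of_nat M * (u + Z.of_nat y) + Z.of_nat (t * St + 1))%Z ::
  map (fun j => Z.of_nat M * (u + Z.of_nat (nth j v 0%nat)) + Z.of_nat (t * St + 2 + j))%Z (seq 0 (length v)).
Definition PL M St T (L : list fact) : list Z :=
  flat_map (fun i => pts M St T (GvL L) (length L) i (nth i L dflt)) (seq 0 (length L)).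

Lemma list_sum_in a l : In a l -> a <= list_sum l.
Proof. induction l; simpl; [tauto|]. intros [->|H]; [lia|]. specialize (IHl H). lia. Qed.
Lemma nth_le_sum j v : nth j v 0 <= list_sum v.
Proof. revert j; induction v; intros [|j]; simpl; try lia. specialize (IHv j). lia. Qed.

Lemma bounds L i p v y : i < length L -> nth i L dflt = (p, v, y) ->
  y < GvL L /\ forall j, nth j v 0 < GvL L.
Proof.
  intros Hi E. assert (Hin : In (p, v, y) L) by (rewrite <- E; apply nth_In; auto).
  assert (fsize (p, v, y) <= list_sum (map fsize L)) by (apply list_sum_in; apply in_map; auto).
  unfold GvL, fsize in *; simpl in *. split; [lia|]. intros j. pose proof (nth_le_sum j v). lia.
Qed.

Lemma in_PL M St T L z : In z (PL M St T L) <-> exists i, i < length L /\ In z (pts M St T (GvL L) (length L) i (nth i L dflt)).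
Proof. unfold PL. rewrite in_flat_map. split.
  - intros [i [Hi Hz]]. apply in_seq in Hi. exists i; split; [lia|auto].
  - intros [i [Hi Hz]]. exists i; split; auto. apply in_seq; lia. Qed.

Lemma placement M St T L i p v y : i < length L -> nth i L dflt = (p, v, y) -> length v = snd p ->
  FactZ (PL M St T L) (Z.of_nat (GvL L)) M St (idx p T) (pos (GvL L) (length L) i) (snd p)
        (fun j => Z.of_nat (nth j v 0)) (Z.of_nat y).
Proof.
  intros Hi E Hl. destruct (bounds L i p v y Hi E) as [By Bv].
  assert (Hpts : forall z, In z (pts M St T (GvL L) (length L) i (p, v, y)) -> In z (PL M St T L)).
  { intros z Hz. apply in_PL. exists i. rewrite E. auto. }
  unfold FactZ, rdZ. split; [split|split; [split; [lia|split; [lia|]]|]].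
  - unfold pos. apply Nat2Z.is_nonneg.
  - apply Hpts. simpl. left; auto.
  - apply Hpts. simpl. right; left; auto.
  - intros j Hj. specialize (Bv j). split; [lia|split; [lia|]]. apply Hpts. simpl. right; right.
    apply in_map_iff. exists j. split; auto. apply in_seq. lia.
Qed.

Lemma decode M St T L i X t c z : closedT T -> good T L -> i < length L ->
  M = St * length T -> (forall q, In q T -> snd q + 2 <= St) ->
  t < length T -> c < St ->
  In z (pts M St T (GvL L) (length L) i (nth i L dflt)) ->
  z = (Z.of_nat M * X + Z.of_nat (t * St + c))%Z ->
  exists p v y, nth i L dflt = (p, v, y) /\ In p T /\ length v = snd p /\ idx p T = t /\
   ((c = 0 /\ X = pos (GvL L) (length L) i) \/
    (c = 1 /\ X = (pos (GvL L) (length L) i + Z.of_nat y)%Z) \/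
    (exists j, j < length v /\ c = 2 + j /\ X = (pos (GvL L) (length L) i + Z.of_nat (nth j v 0%nat))%Z)).
Proof.
  intros Hcl HG Hi HM Har Ht Hc Hz Ez.
  assert (Hin : In (nth i L dflt) L) by (apply nth_In; auto).
  destruct (nth i L dflt) as [[p v] y] eqn:E.
  assert (Hgood : In p T /\ length v = snd p).
  { clear -HG Hin. induction HG; simpl in Hin; [contradiction|]. destruct Hin as [E0|Hin]; [subst x; simpl in *; auto|auto]. }
  destruct Hgood as [HpT Hlv]. pose proof (Har p HpT) as Hap.
  pose proof (proj1 (idx_spec p T HpT)) as Hti.
  assert (Htr : forall t' c', t' < length T -> c' < St -> (0 <= Z.of_nat (t' * St + c') < Z.of_nat M)%Z).
  { intros t' c' H1 H2. subst M. split; [lia|]. apply Nat2Z.inj_lt. nia. }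
  exists p, v, y. split; auto. split; auto. split; auto.
  simpl in Hz. destruct Hz as [Hz|[Hz|Hz]].
  - rewrite Ez in Hz. apply uniq in Hz; try (apply Htr; lia); try (rewrite <- (Nat.add_0_r (idx p T * St)); apply Htr; lia); try (rewrite <- Nat.add_assoc; apply Htr; lia).
    destruct Hz as [HX Hr]. assert (H : (Z.of_nat St * Z.of_nat t + Z.of_nat c = Z.of_nat St * Z.of_nat (idx p T) + 0)%Z) by nia.
    apply (uniq (Z.of_nat St) (Z.of_nat t) (Z.of_nat (idx p T)) (Z.of_nat c) 0) in H; [|lia|lia].
    destruct H. split; [lia|]. left. split; [lia|auto].
  - rewrite Ez in Hz. apply uniq in Hz; try (apply Htr; lia); try (rewrite <- (Nat.add_0_r (idx p T * St)); apply Htr; lia); try (rewrite <- Nat.add_assoc; apply Htr; lia).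
    destruct Hz as [HX Hr]. assert (H : (Z.of_nat St * Z.of_nat t + Z.of_nat c = Z.of_nat St * Z.of_nat (idx p T) + 1)%Z) by nia.
    apply (uniq (Z.of_nat St) (Z.of_nat t) (Z.of_nat (idx p T)) (Z.of_nat c) 1) in H; [|lia|lia].
    destruct H. split; [lia|]. right; left. split; [lia|auto].
  - apply in_map_iff in Hz. destruct Hz as [j [Hz Hj]]. apply in_seq in Hj.
    rewrite Ez in Hz. apply uniq in Hz; try (apply Htr; lia); try (rewrite <- (Nat.add_0_r (idx p T * St)); apply Htr; lia); try (rewrite <- Nat.add_assoc; apply Htr; lia).
    destruct Hz as [HX Hr]. assert (H : (Z.of_nat St * Z.of_nat t + Z.of_nat c = Z.of_nat St * Z.of_nat (idx p T) + Z.of_nat (2 + j))%Z) by nia.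
    apply (uniq (Z.of_nat St) (Z.of_nat t) (Z.of_nat (idx p T)) (Z.of_nat c) (Z.of_nat (2 + j))) in H; [|lia|lia].
    destruct H. split; [lia|]. right; right. exists j. split; [lia|]. split; [lia|auto].
Qed.

Lemma offset Gv N i i' a b : i < N -> i' < N -> 0 < Gv -> (0 <= a < Z.of_nat Gv)%Z -> (0 <= b < Z.of_nat Gv)%Z ->
  (pos Gv N i + a = pos Gv N i' + b)%Z -> i = i' /\ a = b.
Proof.
  intros Hi Hi' HG Ha Hb E. unfold pos in E.
  rewrite !Nat2Z.inj_mul in E. rewrite !(Z.mul_comm (Z.of_nat (_ - _))) in E.
  apply uniq in E; auto. destruct E as [E1 E2]. split; [lia|auto].
Qed.

Lemma readback M St T L p u k A y : closedT T -> good T L ->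
  M = St * length T -> (forall q, In q T -> snd q + 2 <= St) -> In p T -> k = snd p ->
  FactZ (PL M St T L) (Z.of_nat (GvL L)) M St (idx p T) u k A y ->
  exists i v yv, i < length L /\ nth i L dflt = (p, v, yv) /\ length v = snd p /\
    u = pos (GvL L) (length L) i /\ y = Z.of_nat yv /\ forall j, j < k -> A j = Z.of_nat (nth j v 0).
Proof.
  intros Hcl HG HM Har Hp -> [[Hu Hm] [Hr Ha]].
  pose proof (proj1 (idx_spec p T Hp)) as Hti. pose proof (Har p Hp) as Hap.
  assert (HGv : 0 < GvL L) by (unfold GvL; lia).
  apply in_PL in Hm. destruct Hm as [i [Hi Hm]].
  destruct (decode M St T L i u (idx p T) 0 _ Hcl HG Hi HM Har Hti ltac:(lia) Hm ltac:(rewrite Nat.add_0_r; reflexivity))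
    as (p1 & v & yv & E1 & Hp1 & Hl1 & It1 & C1).
  assert (p1 = p) by (apply (idx_inj p1 p T); auto). subst p1.
  assert (Hu' : u = pos (GvL L) (length L) i) by (destruct C1 as [[_ ?]|[[? _]|[j [_ [? _]]]]]; auto; lia).
  clear C1.
  destruct (bounds L i p v yv Hi E1) as [Byv Bv].
  exists i, v, yv. repeat split; auto.
  - destruct Hr as (Hy0 & Hy1 & Hyin). apply in_PL in Hyin. destruct Hyin as [i' [Hi' Hyin]].
    destruct (decode M St T L i' (u + y) (idx p T) 1 _ Hcl HG Hi' HM Har Hti ltac:(lia) Hyin eq_refl)
      as (p2 & v2 & y2 & E2 & Hp2 & Hl2 & It2 & C2).
    destruct (bounds L i' p2 v2 y2 Hi' E2) as [By2 Bv2].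
    destruct C2 as [[? _]|[[_ C2]|[j [_ [? _]]]]]; try lia.
    rewrite Hu' in C2. apply offset in C2; try lia. destruct C2 as [<- C2]. rewrite E1 in E2. inversion E2; subst. lia.
  - intros j Hj. destruct (Ha j Hj) as (Hy0 & Hy1 & Hyin). apply in_PL in Hyin. destruct Hyin as [i' [Hi' Hyin]].
    destruct (decode M St T L i' (u + A j) (idx p T) (2 + j) _ Hcl HG Hi' HM Har Hti ltac:(lia) Hyin ltac:(rewrite Nat.add_assoc; reflexivity))
      as (p2 & v2 & y2 & E2 & Hp2 & Hl2 & It2 & C2).
    destruct (bounds L i' p2 v2 y2 Hi' E2) as [By2 Bv2].
    destruct C2 as [[? _]|[[? _]|[j' [Hj' [Ej C2]]]]]; try lia.
    assert (j' = j) by lia. subst j'.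
    specialize (Bv2 j).
    rewrite Hu' in C2. apply offset in C2; try lia. destruct C2 as [<- C2]. rewrite E1 in E2. inversion E2; subst. lia.
Qed.

Lemma good_local T L i : good T L -> i < length L ->
  Local (nth i L dflt) (skipn (S i) L) /\ In (fst (fst (nth i L dflt))) T /\
  length (snd (fst (nth i L dflt))) = snd (fst (fst (nth i L dflt))).
Proof.
  intros HG; revert i; induction HG as [|x L HL IHL HLoc HT HLen]; simpl; intros i Hi; [lia|].
  destruct i as [|i]; simpl; auto. apply IHL. lia.
Qed.

Lemma skipn_in (L : list fact) n d : In d (skipn n L) -> exists i, n <= i < length L /\ nth i L dflt = d.
Proof.
  revert n; induction L as [|x L IH]; intros n H; simpl in *.
  - destruct n; simpl in H; contradiction.
  - destruct n as [|n]; simpl in H.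
    + destruct H as [<-|H]. exists 0; simpl; split; [lia|auto].
      destruct (IH 0 H) as [i [Hi E]]. exists (S i); simpl; split; [lia|auto].
    + destruct (IH n H) as [i [Hi E]]. exists (S i); simpl; split; [lia|auto].
Qed.

Lemma pos_lt Gv N i i' : 0 < Gv -> i < i' -> i' < N -> (pos Gv N i' < pos Gv N i)%Z.
Proof. intros. unfold pos. apply Nat2Z.inj_lt. nia. Qed.

Lemma depF M St T L i q w z : good T L -> i < length L -> In (q, w, z) (skipn (S i) L) ->
  exists i', (0 <= pos (GvL L) (length L) i' < pos (GvL L) (length L) i)%Z /\
   FactZ (PL M St T L) (Z.of_nat (GvL L)) M St (idx q T) (pos (GvL L) (length L) i') (snd q)
     (fun j => Z.of_nat (nth j w 0)) (Z.of_nat z).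
Proof.
  intros HG Hi Hd. destruct (skipn_in L (S i) _ Hd) as [i' [Hi' E]].
  exists i'. split. split. unfold pos; apply Nat2Z.is_nonneg. apply pos_lt; unfold GvL; lia.
  destruct (good_local T L i' HG ltac:(lia)) as (_ & _ & Hl). rewrite E in Hl. simpl in Hl.
  apply placement; auto. lia.
Qed.

Lemma fin_choice (Pp : nat -> nat -> Prop) n : (forall j, j < n -> exists i, Pp j i) -> exists F, forall j, j < n -> Pp j (F j).
Proof.
  induction n as [|n IH]; intros H. exists (fun _ => 0). intros; lia.
  destruct IH as [F HF]. intros j Hj; apply H; lia.
  destruct (H n ltac:(lia)) as [i Hi]. exists (fun j => if j =? n then i else F j).
  intros j Hj. destruct (Nat.eqb_spec j n). subst; auto. apply HF; lia.
Qed.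

Lemma local_conc M St T L i p v yv m : good T L -> i < length L -> nth i L dflt = (p, v, yv) ->
  exists W Zs n' r, concZ (PL M St T L) (Z.of_nat (GvL L)) M St T p (pos (GvL L) (length L) i)
     (Z.of_nat yv) m n' r (fun j => Z.of_nat (nth j v 0)) W Zs.
Proof.
  intros HG Hi E. destruct (good_local T L i HG Hi) as (HLoc & HpT & Hl). rewrite E in HLoc, HpT, Hl.
  simpl in HpT, Hl.
  set (u := pos (GvL L) (length L) i).
  destruct p as [g k]. simpl in Hl.
  destruct g as [| |i0|f gs|f h|f]; simpl in HLoc |- *.
  - exists (fun _ => 0%Z), (fun _ => 0%Z), 0%Z, 0%Z. subst; auto.
  - exists (fun _ => 0%Z), (fun _ => 0%Z), 0%Z, 0%Z. destruct HLoc as [Hk Hy].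
    destruct (Nat.eqb_spec k 0); [lia|]. subst. lia.
  - exists (fun _ => 0%Z), (fun _ => 0%Z), 0%Z, 0%Z. destruct HLoc as [Hk Hy].
    destruct (Nat.ltb_spec i0 k); [|lia]. subst. auto.
  - destruct HLoc as (zs & Hzs & Hgs & Hf).
    destruct (fin_choice (fun j i' => (0 <= pos (GvL L) (length L) i' < u)%Z /\
        FactZ (PL M St T L) (Z.of_nat (GvL L)) M St (idx (nth j gs RZero, k) T) (pos (GvL L) (length L) i') k
          (fun j => Z.of_nat (nth j v 0)) (Z.of_nat (nth j zs 0))) (length gs)) as [F HF].
    { intros j Hj. destruct (depF M St T L i _ _ _ HG Hi (Hgs j Hj)) as [i' Hi']. eauto. }
    destruct (depF M St T L i _ _ _ HG Hi Hf) as [i2 [Hi2 Hf2]]. simpl in Hf2.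
    exists (fun j => if j <? length gs then pos (GvL L) (length L) (F j) else pos (GvL L) (length L) i2),
      (fun j => Z.of_nat (nth j zs 0)), 0%Z, 0%Z.
    split.
    + intros j Hj. destruct (Nat.ltb_spec j (length gs)); [|lia]. destruct (HF j Hj) as [H1 H2]. split; [lia|auto].
    + destruct (Nat.ltb_spec (length gs) (length gs)); [lia|]. split; [lia|auto].
  - destruct HLoc as [Hk HLoc]. destruct (Nat.eqb_spec k 0); [lia|].
    destruct k as [|k]; [lia|]. destruct v as [|v0 v]; simpl in Hl; [lia|]. simpl in HLoc |- *.
    destruct HLoc as [[H0 Hf]|(nn & rr & H0 & Hr & Hh)].
    + destruct (depF M St T L i _ _ _ HG Hi Hf) as [i1 [Hi1 Hf1]]. simpl in Hf1.
      exists (fun _ => pos (GvL L) (length L) i1), (fun _ => 0%Z), 0%Z, 0%Z. left.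
      split; [subst; auto|]. split; [lia|]. rewrite Nat.sub_0_r in Hf1 |- *. auto.
    + destruct (depF M St T L i _ _ _ HG Hi Hr) as [i1 [Hi1 Hf1]]. simpl in Hf1.
      destruct (depF M St T L i _ _ _ HG Hi Hh) as [i2 [Hi2 Hf2]]. simpl in Hf2.
      exists (fun j => if j =? 0 then pos (GvL L) (length L) i1 else pos (GvL L) (length L) i2), (fun _ => 0%Z),
        (Z.of_nat nn), (Z.of_nat rr). right. simpl.
      split; [subst; lia|]. split; [lia|]. split.
      * eapply FactZ_ext; [|exact Hf1]. intros [|j] Hj; simpl; auto.
      * split; [lia|]. eapply FactZ_ext; [|exact Hf2]. intros [|[|j]] Hj; simpl; auto.
  - destruct HLoc as [Hf0 Hm].
    destruct (depF M St T L i _ _ _ HG Hi Hf0) as [i1 [Hi1 Hf1]]. simpl in Hf1.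
    destruct (Z_le_dec 0 m) as [Hm0|Hm0]; [destruct (Z_lt_dec m (Z.of_nat yv)) as [Hmy|Hmy]|].
    + destruct (Hm (Z.to_nat m) ltac:(lia)) as [z Hz].
      destruct (depF M St T L i _ _ _ HG Hi Hz) as [i2 [Hi2 Hf2]]. simpl in Hf2.
      exists (fun j => if j =? 0 then pos (GvL L) (length L) i1 else pos (GvL L) (length L) i2),
        (fun _ => Z.of_nat (S z)), 0%Z, 0%Z. simpl. split.
      * split; [lia|]. eapply FactZ_ext; [|exact Hf1]. intros [|j] Hj; simpl; auto.
      * intros _. split; [lia|]. split; [lia|]. eapply FactZ_ext; [|exact Hf2]. intros [|j] Hj; simpl; auto. lia.
    + exists (fun j => pos (GvL L) (length L) i1), (fun _ => 0%Z), 0%Z, 0%Z. simpl. split.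
      * split; [lia|]. eapply FactZ_ext; [|exact Hf1]. intros [|j] Hj; simpl; auto.
      * intros; lia.
    + exists (fun j => pos (GvL L) (length L) i1), (fun _ => 0%Z), 0%Z, 0%Z. simpl. split.
      * split; [lia|]. eapply FactZ_ext; [|exact Hf1]. intros [|j] Hj; simpl; auto.
      * intros; lia.
Qed.

Lemma concZ_ext P G M St T p u y m n' r A A' W Zs : (forall j, j < snd p -> A j = A' j) ->
  concZ P G M St T p u y m n' r A W Zs -> concZ P G M St T p u y m n' r A' W Zs.
Proof.
  destruct p as [g k]; simpl. intros HA. destruct g as [| |i|f gs|f h|f]; simpl; auto.
  - destruct (Nat.eqb_spec k 0); auto. rewrite HA by lia. auto.
  - destruct (Nat.ltb_spec i k); auto. rewrite HA by lia. auto.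
  - intros [H1 H2]. split; auto. intros j Hj. destruct (H1 j Hj) as [H3 H4]. split; auto.
    eapply FactZ_ext; [|exact H4]. auto.
  - destruct (Nat.eqb_spec k 0); auto. rewrite (HA 0) by lia.
    intros [(H1 & H2 & H3)|(H1 & H2 & H3 & H4 & H5)]; [left|right].
    + split; auto. split; auto. eapply FactZ_ext; [|exact H3]. intros j Hj; simpl; apply HA; lia.
    + split; auto. split; auto. split. eapply FactZ_ext; [|exact H3]. intros [|j] Hj; simpl; auto; apply HA; lia.
      split; auto. eapply FactZ_ext; [|exact H5]. intros [|[|j]] Hj; simpl; auto; apply HA; lia.
  - intros [[H1 H2] H3]. split. split; auto. eapply FactZ_ext; [|exact H2]. intros [|j] Hj; simpl; auto; apply HA; lia.
    intros Hm. destruct (H3 Hm) as (H4 & H5 & H6). split; auto. split; auto.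
    eapply FactZ_ext; [|exact H6]. intros [|j] Hj; simpl; auto; apply HA; lia.
Qed.

Definition mkgE (n' r : Z) (W Zs : nat -> Z) : nat -> Z :=
  fun x => match x with 7 => n' | 8 => r | _ => if Nat.odd x then W ((x - 21) / 4) else Zs ((x - 22) / 4) end.
Lemma mkgE_w n' r W Zs j : mkgE n' r W Zs (wvar j) = W j.
Proof.
  assert (E : Nat.odd (wvar j) = true) by (unfold wvar; replace (21 + 4 * j) with (2 * (10 + 2 * j) + 1) by lia; apply Nat.odd_odd).
  assert (D : (wvar j - 21) / 4 = j) by (unfold wvar; replace (21 + 4 * j - 21) with (j * 4) by lia; apply Nat.div_mul; lia).
  change (mkgE n' r W Zs (wvar j)) with (if Nat.odd (wvar j) then W ((wvar j - 21) / 4) else Zs ((wvar j - 22) / 4)).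
  rewrite E, D. reflexivity.
Qed.
Lemma mkgE_z n' r W Zs j : mkgE n' r W Zs (zvar j) = Zs j.
Proof.
  assert (E : Nat.odd (zvar j) = false) by (unfold zvar; replace (22 + 4 * j) with (2 * (11 + 2 * j)) by lia; apply Nat.odd_even).
  assert (D : (zvar j - 22) / 4 = j) by (unfold zvar; replace (22 + 4 * j - 22) with (j * 4) by lia; apply Nat.div_mul; lia).
  change (mkgE n' r W Zs (zvar j)) with (if Nat.odd (zvar j) then W ((zvar j - 21) / 4) else Zs ((zvar j - 22) / 4)).
  rewrite E, D. reflexivity.
Qed.

Lemma subs_head g k : subs g k = (g, k) :: tl (subs g k).
Proof. destruct g; reflexivity. Qed.
Lemma idx_root g : idx (g, 1) (subs g 1) = 0.
Proof. rewrite subs_head. simpl. rewrite peqb_refl. auto. Qed.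

Lemma completeness g x : reval g [x] 0 -> exists P rho, rho 1 = Z.of_nat x /\ holds P rho (Theta g).
Proof.
  intros H.
  pose proof (subs_closed g 1) as Hcl.
  assert (HgT : In (g, 1) (subs g 1)) by (rewrite subs_head; left; auto).
  destruct (build (subs g 1) Hcl g [x] 0 H HgT) as (L & HG & Hin).
  destruct (In_nth L _ dflt Hin) as [i0 [Hi0 E0]].
  assert (Har : forall q, In q (subs g 1) -> snd q + 2 <= SS (subs g 1)) by (intros q Hq; apply (arity_ok_T g q Hq)).
  set (T := subs g 1) in *. set (St := SS T) in *. set (M := St * length T).
  set (rho := fun n => match n with 0 => Z.of_nat (GvL L) | 1 => Z.of_nat x | 2 => pos (GvL L) (length L) i0 | _ => 0%Z end).
  exists (PL M St T L), rho. split; [reflexivity|].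
  unfold Theta. cbv zeta. fold T St M.
  rewrite holds_alls. intros fA. rewrite holds_exs.
  set (A := fun j => fA (avar j)).
  pose proof (placement M St T L i0 (g, 1) [x] 0 Hi0 E0 eq_refl) as HTop.
  assert (HidT : idx (g, 1) T = 0) by apply idx_root. rewrite HidT in HTop.
  assert (TopOK : forall gE, holds (PL M St T L) (ov (XE St) gE (ov (XA St) fA rho)) (Top M St)).
  { intros gE. unfold Top. rewrite factF_sem. cbn [eval_term].
    destruct (val_lemma St fA gE rho 0) as [V0 _]. destruct (val_lemma St fA gE rho 1) as [V1 _].
    destruct (val_lemma St fA gE rho 2) as [V2 _]. cbv zeta in V0, V1, V2.
    rewrite V0, V2 by lia. eapply FactZ_ext; [|exact HTop]. intros j Hj. rewrite V1 by lia.
    destruct j; [reflexivity|lia]. }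
  assert (Hval : forall gE, let rho' := ov (XE St) gE (ov (XA St) fA rho) in
     rho' 0 = Z.of_nat (GvL L) /\ rho' 3 = fA 3 /\ rho' 4 = fA 4 /\ rho' 5 = fA 5 /\ rho' 6 = fA 6 /\
     rho' 7 = gE 7 /\ rho' 8 = gE 8 /\ (forall j, j < St -> rho' (avar j) = A j) /\
     (forall j, j <= St -> rho' (wvar j) = gE (wvar j) /\ rho' (zvar j) = gE (zvar j))).
  { intros gE rho'. 
    destruct (val_lemma St fA gE rho 0) as [V0 _]. destruct (val_lemma St fA gE rho 3) as [_ [V3 _]].
    destruct (val_lemma St fA gE rho 4) as [_ [V4 _]]. destruct (val_lemma St fA gE rho 5) as [_ [V5 _]].
    destruct (val_lemma St fA gE rho 6) as [_ [V6 _]]. destruct (val_lemma St fA gE rho 7) as [_ [_ [V7 _]]].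
    destruct (val_lemma St fA gE rho 8) as [_ [_ [V8 _]]].
    destruct (val_lemma St fA gE rho 0) as [_ [_ [_ [VA VW]]]]. cbv zeta in *.
    unfold rho'. repeat split; auto; try (apply V0 || apply V3 || apply V4 || apply V5 || apply V6 || apply V7 || apply V8); try lia.
    all: intros; apply VW; auto. }
  destruct (classic (exists p, In p T /\ Z.of_nat (idx p T) = fA 3 /\
              FactZ (PL M St T L) (Z.of_nat (GvL L)) M St (idx p T) (fA 4) (snd p) A (fA 5)))
    as [[p [HpT [Hs HF]]]|Hno].
  - destruct (readback M St T L p (fA 4) (snd p) A (fA 5) Hcl HG eq_refl Har HpT eq_refl HF)
      as (i & v & yv & Hi & E & Hl & Hu & Hy & HA).
    destruct (local_conc M St T L i p v yv (fA 6) HG Hi E) as (W & Zs & n' & r & HC).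
    exists (mkgE n' r W Zs).
    destruct (Hval (mkgE n' r W Zs)) as (R0 & R3 & R4 & R5 & R6 & R7 & R8 & RA & RW). cbv zeta in *.
    unfold Matrix. cbn [holds]. split; [apply TopOK|].
    rewrite holds_fold_map. intros p' Hp'. unfold Cj. cbn [holds]. intros [Hs' HF'].
    rewrite eval_num in Hs'. cbn [eval_term] in Hs'. rewrite R3 in Hs'.
    assert (p' = p) by (apply (idx_inj p' p T); auto; lia). subst p'.
    rewrite (concF_sem _ _ M St T p (Z.of_nat (GvL L)) (fA 4) (fA 5) (fA 6) n' r A W Zs); auto.
    + rewrite Hu, Hy. eapply concZ_ext; [|exact HC]. intros j Hj. symmetry. apply HA. auto.
    + apply (arity_ok_T g p HpT).
    + intros j Hj. destruct (RW j Hj) as [RW1 RW2]. rewrite RW1, RW2. rewrite mkgE_w, mkgE_z. auto.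
  - exists (fun _ => 0%Z).
    destruct (Hval (fun _ => 0%Z)) as (R0 & R3 & R4 & R5 & R6 & R7 & R8 & RA & RW). cbv zeta in *.
    unfold Matrix. cbn [holds]. split; [apply TopOK|].
    rewrite holds_fold_map. intros p' Hp'. unfold Cj. cbn [holds]. intros [Hs' HF'].
    exfalso. apply Hno. exists p'. split; auto.
    rewrite eval_num in Hs'. cbn [eval_term] in Hs'. rewrite R3 in Hs'. split; [lia|].
    rewrite factF_sem in HF'. cbn [eval_term] in HF'. rewrite R0, R4, R5 in HF'.
    eapply FactZ_ext; [|exact HF']. intros j Hj. apply RA. pose proof (Har p' Hp'). lia.
Qed.

Theorem theorem3 :
  ~ exists f : recf,
      forall p : form, in_class p ->
        (sat p -> reval f [code_form p] 1) /\
        (~ sat p -> reval f [code_form p] 0).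
Proof.
  intros [f Hf].
  set (Hp := RComp f [Ef]).
  set (th := Theta Hp). set (x0 := code_form th).
  set (F := FAnd (FEq (TVar 1) (num x0)) th).
  assert (HE : reval Ef [x0] (code_form F)) by (apply Ef_ok; reflexivity).
  assert (Hcls : in_class F) by apply in_class_F.
  destruct (Hf F Hcls) as [H1 H0].
  assert (Hsound : sat F -> reval Hp [x0] 0).
  { intros [rho [P Hh]]. unfold F in Hh. cbn [holds] in Hh. destruct Hh as [Heq Hth].
    rewrite eval_num in Heq. cbn [eval_term] in Heq.
    destruct (step_lemma P rho Hp Hth) as [HTop _].
    pose proof (soundness P rho Hp Hth) as Hs. cbv zeta in Hs.
    assert (HTop' : FactZ P (rho 0) (SS (subs Hp 1) * length (subs Hp 1)) (SS (subs Hp 1))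
              (idx (Hp, 1) (subs Hp 1)) (rho 2) 1 (fun _ => rho 1) 0%Z) by (rewrite idx_root; exact HTop).
    assert (Hin : In (Hp, 1) (subs Hp 1)) by (rewrite subs_head; left; auto).
    pose proof (Hs (S (Z.to_nat (rho 2))) (Hp, 1) (rho 2) (fun _ => rho 1) 0%Z Hin ltac:(lia) HTop') as R.
    unfold args in R. simpl in R. rewrite Heq, Nat2Z.id in R. exact R. }
  assert (Hcomp : reval Hp [x0] 0 -> sat F).
  { intros R. destruct (completeness Hp x0 R) as (P & rho & E1 & Hth). exists rho, P.
    unfold F. cbn [holds]. split; auto. rewrite eval_num. cbn [eval_term]. auto. }
  assert (Hrun : forall y, reval f [code_form F] y -> reval Hp [x0] y).
  { intros y Hy. eapply ev_comp; [econstructor; [exact HE|constructor]|exact Hy]. }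
  assert (HnS : ~ sat F).
  { intros HS. pose proof (Hrun _ (H1 HS)) as Ra. pose proof (Hsound HS) as Rb.
    pose proof (reval_det _ _ _ Ra _ Rb). discriminate. }
  apply HnS. apply Hcomp. apply Hrun. apply H0. exact HnS.
Qed.
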